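(* Let $n\ge 1$, $r\ge 0$, and let $J\subseteq\Delta^r_n$ be a nonempty subset. Then $J$ is M-convex if and only if its characteristic function $\chi_J\colon\Delta^r_n\to\mathbb K$ satisfies the Plücker relations \[ \sum_{k=0}^s \chi_J\big(\alpha+\epsilon_{i_0}+\dots+\widehat{\epsilon_{i_k}}+\dots+\epsilon_{i_s}\big)\cdot\chi_J\big(\alpha+\epsilon_{i_k}+\epsilon_{j_2}+\dots+\epsilon_{j_s}\big)\ \in\ N_{\mathbb K} \] for every $s\in\{2,\dots,r\}$, every $\alpha\in\Delta^{r-s}_n$ with $\delta^-_J\le\alpha$, and all $i_0,\dots,i_s,j_2,\dots,j_s\in[n]$ such that $\alpha+\epsilon_{i_0}+\dots+\epsilon_{i_s}+\epsilon_{j_2}+\dots+\epsilon_{j_s}\le\delta^+_J$. (Here the hat means the term is omitted.)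
   Context: $\Delta^r_n=\{\alpha\in\mathbb N^n:\alpha_1+\dots+\alpha_n=r\}$; $\epsilon_i$ is the $i$-th standard basis vector; $\le$ is the componentwise partial order on $\mathbb Z^n$. A nonempty $J\subseteq\Delta^r_n$ is M-convex if for all $\alpha,\beta\in J$ and every $i\in[n]$ with $\alpha_i<\beta_i$ there is $j\in[n]$ with $\alpha_j>\beta_j$ such that both $\alpha+\epsilon_i-\epsilon_j$ and $\beta-\epsilon_i+\epsilon_j$ lie in $J$. For finite $J$, $\delta^-_J=\inf J$ and $\delta^+_J=\sup J$ are the vectors with $\delta^-_{J,i}=\min\{\alpha_i:\alpha\in J\}$ and $\delta^+_{J,i}=\max\{\alpha_i:\alpha\in J\}$. The Krasner hyperfield is $\mathbb K=\{0,1\}$; a formal sum of elements of $\mathbb K$ lies in its null set $N_{\mathbb K}$ if and only if the number of summands equal to $1$ is not exactly one. $\chi_J(\alpha)=1$ if $\alpha\in J$ and $0$ otherwise. *)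

(* Defs.v *)
From HB Require Import structures.
From mathcomp Require Import all_boot all_order.
From mathcomp Require Import finmap.
Set Implicit Arguments. Unset Strict Implicit. Unset Printing Implicit Defensive.


Definition vec (n : nat) := {ffun 'I_n -> nat}.

Definition in_Delta (n r : nat) (a : vec n) : bool := (\sum_(t < n) a t == r)%N.

Definition vle (n : nat) (a b : vec n) : bool := [forall t, a t <= b t].

Definition eps (n : nat) (i : 'I_n) : vec n := [ffun t => nat_of_bool (t == i)].
Definition vadd (n : nat) (a b : vec n) : vec n := [ffun t => a t + b t].
Definition vsub (n : nat) (a b : vec n) : vec n := [ffun t => a t - b t].

Definition Mconvex (n : nat) (J : {fset vec n}) : Prop :=
  forall a b, a \in J -> b \in J -> forall i : 'I_n, a i < b i ->
  exists j : 'I_n, [/\ b j < a j,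
     vsub (vadd a (eps i)) (eps j) \in J &
     vsub (vadd b (eps j)) (eps i) \in J].

Definition delta_plus (n : nat) (J : {fset vec n}) : vec n :=
  [ffun t => \max_(b <- J) b t].
(* delta^-_J = inf J (componentwise min); the seed delta_plus J t is an upper
   bound of all b t with b in J, so for nonempty J this is exactly the min. *)
Definition delta_minus (n : nat) (J : {fset vec n}) : vec n :=
  [ffun t => \big[minn/delta_plus J t]_(b <- J) b t].

(* Krasner hyperfield K = {0,1} = bool; product is andb; a formal sum
   (list of summands) is in the null set iff the number of 1's is not 1. *)
Definition K_null (s : seq bool) : bool := count id s != 1%N.

Definition chi (n : nat) (J : {fset vec n}) (b : vec n) : bool := b \in J.

Definition plA (n s : nat) (alpha : vec n) (i : 'I_s.+1 -> 'I_n) (k : 'I_s.+1)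
  : vec n :=
  [ffun t => alpha t + \sum_(l < s.+1 | l != k) nat_of_bool (i l == t)].
Definition plB (n s : nat) (alpha : vec n) (i : 'I_s.+1 -> 'I_n)
  (j : 'I_s.-1 -> 'I_n) (k : 'I_s.+1) : vec n :=
  [ffun t => alpha t + nat_of_bool (i k == t)
              + \sum_(m < s.-1) nat_of_bool (j m == t)].
Definition plTot (n s : nat) (alpha : vec n) (i : 'I_s.+1 -> 'I_n)
  (j : 'I_s.-1 -> 'I_n) : vec n :=
  [ffun t => alpha t + \sum_(l < s.+1) nat_of_bool (i l == t)
              + \sum_(m < s.-1) nat_of_bool (j m == t)].

Definition Pluecker (n r : nat) (J : {fset vec n}) : Prop :=
  forall s : nat, 2 <= s <= r ->
  forall alpha : vec n, in_Delta (r - s) alpha -> vle (delta_minus J) alpha ->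
  forall (i : 'I_s.+1 -> 'I_n) (j : 'I_s.-1 -> 'I_n),
  vle (plTot alpha i j) (delta_plus J) ->
  K_null [seq chi J (plA alpha i k) && chi J (plB alpha i j k) | k <- enum 'I_s.+1].

(* Main.v *)
Require Import Defs.
From mathcomp Require Import all_boot all_order finmap zify.
Set Implicit Arguments. Unset Strict Implicit. Unset Printing Implicit Defensive.

Ltac gprep := repeat match goal with H : context [@fun_of_fin _ _ _ _ _] |- _ => revert H end;
  repeat match goal with |- context [@fun_of_fin ?A ?B ?P ?f ?x] =>
  let y := fresh "y" in set y := (@fun_of_fin A B P f x); clearbody y; change nat in y end.
Ltac glia := repeat (match goal with H : _ |- _ => clear H end); repeat match goal with |- context [@fun_of_fin ?A ?B ?P ?f ?x] =>
  let y := fresh "y" in generalize (@fun_of_fin A B P f x); intro y end; lia.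

Lemma vext n (a b : vec n) : (forall t : 'I_n, a t = b t) -> a = b.
Proof. by move=> h; apply/ffunP. Qed.

Lemma cnt_D1 n m (f : 'I_m -> 'I_n) k t :
  (\sum_(l < m | l != k) (f l == t) + (f k == t) = \sum_(l < m) (f l == t))%N.
Proof. by rewrite [RHS](bigD1 k) //= addnC. Qed.

Lemma plA_E n s (al : vec n) (f : 'I_s.+1 -> 'I_n) k t :
  (plA al f k t + (f k == t) = al t + \sum_(l < s.+1) (f l == t))%N.
Proof. by rewrite ffunE -addnA cnt_D1. Qed.

Lemma plB_E n s (al : vec n) (f : 'I_s.+1 -> 'I_n) g k t :
  plB al f g k t = (al t + (f k == t) + \sum_(m < s.-1) (g m == t))%N.
Proof. by rewrite ffunE. Qed.

Lemma plTot_E n s (al : vec n) (f : 'I_s.+1 -> 'I_n) g t :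
  plTot al f g t = (al t + \sum_(l < s.+1) (f l == t) + \sum_(m < s.-1) (g m == t))%N.
Proof. by rewrite ffunE. Qed.

Lemma vE n (a : vec n) x y t :
  vsub (vadd a (eps x)) (eps y) t = (a t + (x == t) - (y == t))%N.
Proof. by rewrite !ffunE ![_ == x]eq_sym ![t == y]eq_sym. Qed.

Lemma count_enum_one m (f : 'I_m.+1 -> bool) :
  count id [seq f k | k <- enum 'I_m.+1] != 1%N -> f ord0 ->
  exists k, k != ord0 /\ f k.
Proof.
move=> H f0; case: (pickP (fun k => (k != ord0) && f k)) => [k /andP[]|Hn].
  by move=> ? ?; exists k.
move: H; rewrite count_map.
rewrite (@eq_count _ _ (pred1 ord0)) ?count_uniq_mem ?enum_uniq ?mem_enum //.
move=> k /=; case: (eqVneq k ord0) => [->|ne] //.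
by move: (Hn k); rewrite ne /=.
Qed.

Lemma count_enum_two m (f : 'I_m -> bool) k0 k1 :
  k0 != k1 -> f k0 -> f k1 ->
  count id [seq f k | k <- enum 'I_m] != 1%N.
Proof.
move=> ne f0 f1; rewrite count_map.
have: (count (predU (pred1 k0) (pred1 k1)) (enum 'I_m) <= count f (enum 'I_m))%N.
  by apply: sub_count => k /= /orP [] /eqP ->.
have := count_predUI (pred1 k0) (pred1 k1) (enum 'I_m).
rewrite !count_uniq_mem ?enum_uniq ?mem_enum //=.
have -> : count (predI (pred1 k0) (pred1 k1)) (enum 'I_m) = 0%N.
  apply/eqP; rewrite -leqn0 -(count_pred0 (enum 'I_m)); apply: sub_count.
  by move=> k /= /andP [/eqP -> /eqP E]; rewrite E eqxx in ne.
move=> E; rewrite addn0 in E; rewrite E (_ : count (preim _ id) _ = count f (enum 'I_m)) //; lia.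
Qed.

Lemma minS (T : eqType) (s : seq T) x (F : T -> nat) y : y \in s ->
  (\big[minn/x]_(b <- s) F b <= F y)%N.
Proof.
elim: s => [|z s IH]; first by [].
rewrite big_cons in_cons => /orP [/eqP ->|/IH]; first exact: geq_minl.
move=> h; exact: leq_trans (geq_minr _ _) h.
Qed.

Lemma minJ n (J : {fset vec n}) x (F : vec n -> nat) y : y \in J ->
  (\big[minn/x]_(b <- J) F b <= F y)%N.
Proof. exact: minS. Qed.

Lemma fwd n r (J : {fset vec n}) : Mconvex J -> Pluecker r J.
Proof.
move=> HM s _ al _ _ i j _.
pose f k := chi J (plA al i k) && chi J (plB al i j k).
case: (pickP f) => [k0 Hk0 | Hn]; last first.
  rewrite /K_null count_map (eq_count (a2 := pred0)) ?count_pred0 // => k; exact: Hn.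
suff [k1 [ne Hk1]] : exists k1, k1 != k0 /\ f k1.
  exact: (count_enum_two (f := f) ne Hk1 Hk0).
have /andP [HA HB] := Hk0; rewrite /chi in HA HB.
pose p := i k0.
case: (pickP (fun k => (k != k0) && (i k == p))) => [k /andP [Hk Hik]| Hn].
  exists k; split => //; rewrite /f /chi.
  have -> : plA al i k = plA al i k0.
    apply: vext => t; have := plA_E al i k t; have := plA_E al i k0 t.
    rewrite (eqP Hik) /p. glia.
  have -> : plB al i j k = plB al i j k0.
    by apply: vext => t; rewrite !plB_E (eqP Hik).
  by rewrite HA HB.
have S0 : forall q, \sum_(l < s.+1 | l != k0) (i l == q) = 0%N ->
    plA al i k0 q = al q.
  by move=> q E; rewrite ffunE E addn0.
have Ap : plA al i k0 p = al p.
  apply: S0; apply: big1 => l Hl; have := Hn l; rewrite Hl /=.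
  by move/negbT/negbTE => ->.
have Hlt : plA al i k0 p < plB al i j k0 p.
  by rewrite Ap plB_E eqxx; glia.
have [q [Hq HA' HB']] := HM _ _ HA HB p Hlt.
case: (pickP (fun l => (l != k0) && (i l == q))) => [k /andP [Hk Hkq]| Hn'];
  last first.
  have := Hq; rewrite S0; first by rewrite plB_E; glia.
  apply: big1 => l Hl; have := Hn' l; rewrite Hl /=.
  by move/negbT/negbTE => ->.
exists k; split => //; rewrite /f /chi.
have -> : plA al i k = vsub (vadd (plA al i k0) (eps p)) (eps q).
  apply: vext => t; rewrite vE; have := plA_E al i k t; have := plA_E al i k0 t.
  rewrite (eqP Hkq) /p; glia.
have -> : plB al i j k = vsub (vadd (plB al i j k0) (eps q)) (eps p).
  by apply: vext => t; rewrite vE !plB_E (eqP Hkq) /p; glia.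
by rewrite HA' HB'.
Qed.

Lemma seqD_ex n (f : 'I_n -> nat) : exists P : seq 'I_n,
  [/\ forall t, count_mem t P = f t, size P = (\sum_t f t)%N &
      forall t, t \in P -> 0 < f t].
Proof.
pose P := flatten [seq nseq (f u) u | u <- enum 'I_n].
have cP : forall t, count_mem t P = f t.
  move=> t; rewrite count_flatten -map_comp.
  rewrite sumnE big_map /= (bigD1_seq t) ?mem_enum ?enum_uniq //= count_nseq /= eqxx mul1n.
  rewrite big1_seq ?addn0 // => u /andP [ne _]; rewrite count_nseq /=.
  by rewrite (negbTE ne) mul0n.
exists P; split => //.
  by rewrite size_flatten /shape -map_comp sumnE big_map -big_enum /=;
     apply: eq_bigr => u _; rewrite size_nseq.
by move=> t; rewrite -has_pred1 has_count cP.
Qed.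

Lemma nth_sum n (s : seq 'I_n) x0 t :
  (\sum_(l < size s) (nth x0 s l == t) = count_mem t s)%N.
Proof.
elim: s => [|x s IH]; first by rewrite big_ord0.
by rewrite /= big_ord_recl /= IH.
Qed.

Lemma nth_sum' n m (s : seq 'I_n) x0 t : size s = m ->
  (\sum_(l < m) (nth x0 s l == t) = count_mem t s)%N.
Proof. by move=> <-; exact: nth_sum. Qed.

Lemma le_sum1 n (f : 'I_n -> nat) k : (f k <= \sum_t f t)%N.
Proof. by rewrite (bigD1 k) //= leq_addr. Qed.

Lemma bwd n r (J : {fset vec n}) : (forall b, b \in J -> in_Delta r b) ->
  Pluecker r J -> forall (a b : vec n), a \in J -> b \in J -> forall i : 'I_n,
  (a i < b i)%N -> exists j : 'I_n, [/\ (b j < a j)%N,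
     vsub (vadd a (eps i)) (eps j) \in J &
     vsub (vadd b (eps j)) (eps i) \in J].
Proof.
move=> HD HP a b Ha Hb i Hi.
have Sa : (\sum_t a t = r)%N := eqP (HD a Ha).
have Sb : (\sum_t b t = r)%N := eqP (HD b Hb).
have Epm : (\sum_t (a t - b t) = \sum_t (b t - a t))%N.
  have : (\sum_t (a t + (b t - a t)) = \sum_t (b t + (a t - b t)))%N.
    by apply: eq_bigr => t _; lia.
  by rewrite !big_split /= Sa Sb => /eqP; rewrite eqn_add2l => /eqP.
have [P [cP szP mP]] := seqD_ex (fun t => a t - b t).
have [M [cM szM _]] := seqD_ex (fun t => b t - a t - (i == t)).
have Hsz : (size M).+1 = size P.
  rewrite szP szM Epm (bigD1 i) //= [in RHS](bigD1 i) //= eqxx.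
  rewrite (eq_bigr (fun t => b t - a t)) => [|t /negbTE ne]; last first.
    by rewrite eq_sym ne subn0.
  have h : (b i - a i - true).+1 = (b i - a i)%N by move: Hi; rewrite /=; glia.
  by rewrite -addSn h.
have Fi : forall t, ((i == t) <= b t - a t)%N.
  move=> t; case: (eqVneq i t) => [<-|ne] //=; move: Hi; glia.
case: (posnP (size M)) => [M0|Mpos].
  have EM : M = [::] by apply: size0nil.
  have c0 : forall t, (b t - a t - (i == t) = 0)%N by move=> t; rewrite -cM EM.
  move: Hsz cP mP; rewrite M0; clear szP.
  case: P => [|q [|? ?]] //= _ cP mP.
  have cq : forall t, (a t - b t = (q == t))%N.
    by move=> t; rewrite -cP /= addn0.
  have qP : (0 < a q - b q)%N by apply: mP; rewrite mem_seq1.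
  exists q; split.
  - by move: qP; glia.
  - suff -> : vsub (vadd a (eps i)) (eps q) = b by [].
    apply: vext => t; rewrite vE; have := cq t; have := c0 t; move: qP Hi.
    case: (eqVneq i t) => [E|nit]; case: (eqVneq q t) => [E2|nqt]; subst; glia.
  - suff -> : vsub (vadd b (eps q)) (eps i) = a by [].
    apply: vext => t; rewrite vE; have := cq t; have := c0 t; move: qP Hi.
    case: (eqVneq i t) => [E|nit]; case: (eqVneq q t) => [E2|nqt]; subst; glia.
pose ii := fun l : 'I_(size P).+1 => nth i (i :: P) l.
pose jj := fun m : 'I_(size P).-1 => nth i M m.
have SI : forall t, (\sum_(l < (size P).+1) (ii l == t) = (i == t) + (a t - b t))%N.
  move=> t; transitivity (count_mem t (i :: P)); first exact: (nth_sum (i :: P) i t).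
  by rewrite /= cP.
have SJ : forall t, (\sum_(m < (size P).-1) (jj m == t) = b t - a t - (i == t))%N.
  move=> t; transitivity (count_mem t M); first by apply: nth_sum'; rewrite -Hsz.
  by rewrite cM.
pose al : vec n := [ffun t => minn (a t) (b t)].
have H2 : (2 <= size P <= r)%N.
  apply/andP; split; first by rewrite -Hsz ltnS.
  rewrite szP -Sa; apply: leq_sum => t _; exact: leq_subr.
have H3 : in_Delta (r - size P) al.
  rewrite /in_Delta; apply/eqP.
  have : (\sum_t (al t + (a t - b t)) = \sum_t a t)%N.
    by apply: eq_bigr => t _; rewrite ffunE; glia.
  rewrite big_split /= -szP Sa; lia.
have H4 : vle (delta_minus J) al.
  apply/forallP => t; rewrite !ffunE leq_min; apply/andP; split.
    exact: (@minJ n J _ (fun b : vec n => b t) a Ha).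
  exact: (@minJ n J _ (fun b : vec n => b t) b Hb).
have H5 : vle (plTot al ii jj) (delta_plus J).
  apply/forallP => t; rewrite plTot_E SI SJ.
  apply: (leq_trans (n := maxn (a t) (b t))).
    by rewrite ffunE; have := Fi t; glia.
  rewrite geq_max ffunE; apply/andP; split; exact: leq_bigmax_seq.
have HK := HP (size P) H2 al H3 H4 ii jj H5.
have i0 : ii ord0 = i := erefl.
have EA : plA al ii ord0 = a.
  apply: vext => t; have := plA_E al ii ord0 t; rewrite SI i0 !ffunE; glia.
have EB : plB al ii jj ord0 = b.
  apply: vext => t; rewrite plB_E SJ i0 ffunE; have := Fi t; glia.
have f0 : chi J (plA al ii ord0) && chi J (plB al ii jj ord0).
  by rewrite /chi EA EB Ha Hb.
have [k [nk Hk]] := count_enum_one HK f0.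
have memq : ii k \in P.
  move: nk; rewrite /ii; case: k {Hk} => [[|k'] Hk'] //= _.
  by apply: mem_nth; rewrite -ltnS.
have qP := mP _ memq.
have [q Eq] : exists q, ii k = q by eexists.
rewrite Eq in qP.
exists q; split.
- by rewrite subn_gt0 in qP.
- suff <- : plA al ii k = vsub (vadd a (eps i)) (eps q) by case/andP: Hk.
  apply: vext => t; rewrite vE; have := plA_E al ii k t; rewrite Eq SI.
  rewrite [al t]ffunE; have := Fi t; move: qP Hi.
  case: (eqVneq i t) => [E|nit]; case: (eqVneq q t) => [E2|nqt]; clear Eq; (try subst t); (try subst q); glia.
- suff <- : plB al ii jj k = vsub (vadd b (eps q)) (eps i) by case/andP: Hk.
  apply: vext => t; rewrite vE plB_E Eq SJ [al t]ffunE.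
  have := Fi t; move: qP Hi.
  case: (eqVneq i t) => [E|nit]; case: (eqVneq q t) => [E2|nqt]; clear Eq; (try subst t); (try subst q); glia.
Qed.

Theorem theoremA (n r : nat) (J : {fset vec n}) :
  (1 <= n)%N ->
  J != fset0%fset ->
  (forall b, b \in J -> in_Delta r b) ->
  (Mconvex J <-> Pluecker r J).
Proof.
move=> _ _ HD; split; first exact: fwd.
move=> HP a b Ha Hb i Hi; exact: (bwd HD HP Ha Hb Hi).
Qed.
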